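(* Let $G$ be a locally compact group, $H\subset G$ a discrete subset and $U$ a measurable relatively compact neighbourhood of the identity such that $\{xU\}_{x\in H}$ is a partition of $G$ and $hUh^{-1}=U$ for all $h\in H$. Then there is $n\in\mathbb{N}$ such that for every $l\in H$ the approximate block diagonal determined by $l$ meets at most $n$ band diagonals (determined by elements of $H$), and conversely for every $k\in H$ the band diagonal determined by $k$ meets at most $n$ approximate block diagonals (and hence can be covered by these).
   Context: For $k\in H$, the band diagonal determined by $k$ is $\{(x,y)\in G\times G: xy^{-1}\in kU\}$, and the approximate block diagonal determined by $k$ is $\bigcup\{iU\times jU: i,j\in H,\ ij^{-1}\in kU\}$. *)

(* Defs.v *)
From mathcomp Require Import all_boot all_order all_algebra.
From mathcomp Require Import all_classical all_reals all_analysis.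
Set Implicit Arguments. Unset Strict Implicit. Unset Printing Implicit Defensive.
Local Open Scope classical_set_scope.

Definition is_topological_group (G : topologicalType)
  (mul : G -> G -> G) (inv : G -> G) (one : G) : Prop :=
  [/\ (forall x y z, mul x (mul y z) = mul (mul x y) z),
      (forall x, mul one x = x /\ mul x one = x),
      (forall x, mul (inv x) x = one /\ mul x (inv x) = one),
      continuous (fun p : G * G => mul p.1 p.2) &
      continuous inv].

Definition is_locally_compact_group (G : topologicalType)
  (mul : G -> G -> G) (inv : G -> G) (one : G) : Prop :=
  [/\ is_topological_group mul inv one, hausdorff_space G &
      locally_compact [set: G]].

Definition borel_measurable (G : topologicalType) (A : set G) : Prop :=
  <<s (@open G) >> A.

Definition relatively_compact (G : topologicalType) (A : set G) : Prop :=
  compact (closure A).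

Definition discrete_subset (G : topologicalType) (H : set G) : Prop :=
  forall h, H h -> exists2 V, nbhs h V & (forall y, V y -> H y -> y = h).

Definition ltrans (G : Type) (mul : G -> G -> G) (x : G) (U : set G) : set G :=
  [set mul x u | u in U].

Definition coset_partition (G : Type) (mul : G -> G -> G)
  (H U : set G) : Prop :=
  forall g : G, exists! x, H x /\ ltrans mul x U g.

Definition band_diag (G : Type) (mul : G -> G -> G) (inv : G -> G)
  (U : set G) (k : G) : set (G * G) :=
  [set p | ltrans mul k U (mul p.1 (inv p.2))].

Definition approx_block_diag (G : Type) (mul : G -> G -> G) (inv : G -> G)
  (H U : set G) (k : G) : set (G * G) :=
  [set p | exists i j, [/\ H i, H j, ltrans mul k U (mul i (inv j)),
                          ltrans mul i U p.1 & ltrans mul j U p.2]].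

(* Main.v *)
Require Import Defs.
From mathcomp Require Import all_boot all_order all_algebra.
From mathcomp Require Import all_classical all_reals all_analysis.
Local Open Scope classical_set_scope.

From mathcomp Require Import zify.
Lemma pigeon (T1 T2 : eqType) (R : T1 -> T2 -> Prop) (s : seq T1) (t : seq T2) :
  uniq s -> (forall x, x \in s -> exists2 y, y \in t & R x y) ->
  (forall x x' y, x \in s -> x' \in s -> y \in t -> R x y -> R x' y -> x = x') ->
  (size s <= size t)%N.
Proof.
elim: s t => [//|x s IH] t /= /andP[xs us] hex huniq.
have [y yt Rxy] := hex x (mem_head _ _).
have h1 := count_predC (pred1 y) t.
have h2 : count (predC (pred1 y)) t = size (seq.filter (predC1 y) t).
  by rewrite size_filter; apply: eq_count.
have h3 : (0 < count (pred1 y) t)%N by rewrite -has_count has_pred1.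
suff : (size s <= size (seq.filter (predC1 y) t))%N by lia.
apply: IH => //.
  move=> x' x's; have [y' y't Rxy'] := hex x' (introT orP (or_intror x's)).
  exists y' => //; rewrite mem_filter y't andbT /=; apply/eqP => eyy.
  subst y'; have exx := huniq x x' y (mem_head _ _) (introT orP (or_intror x's)) yt Rxy Rxy'.
  by subst x'; rewrite x's in xs.
move=> a a' b ha ha' hb; apply: huniq; rewrite ?inE ?ha ?ha' ?orbT //.
by move: hb; rewrite mem_filter => /andP[].
Qed.

Lemma count_bound (G : topologicalType) (mul : G -> G -> G) (inv : G -> G) (one : G)
  (H U : set G) :
  is_topological_group mul inv one -> relatively_compact U -> nbhs one U ->
  coset_partition mul H U ->
  exists n : nat, forall (c : G) (s : seq G), uniq s ->
    (forall m, m \in s -> H m /\ exists a b d e, [/\ U a, U b, U d, U e &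
        m = mul c (mul (mul (mul a b) (inv d)) (inv e))]) -> (size s <= n)%N.
Proof.
case=> hA h1 hV hmul hinv hrc hU hpart.
set K := closure U.
pose f := fun q : G * G * G * G => mul (mul (mul q.1.1.1 q.1.1.2) (inv q.1.2)) (inv q.2).
have cfst : forall (T1 T2 : topologicalType) (p : T1 * T2), {for p, continuous fst}.
  by move=> T1 T2 p; exact: cvg_fst.
have csnd : forall (T1 T2 : topologicalType) (p : T1 * T2), {for p, continuous snd}.
  by move=> T1 T2 p; exact: cvg_snd.
have fc : continuous f.
  move=> [[[a b] d] e]; rewrite /f.
  apply: (@continuous2_cvg _ _ _ _ _ _ _ _ mul); first exact: (hmul (_, _)).
    apply: (@continuous2_cvg _ _ _ _ _ _ _ _ mul); first exact: (hmul (_, _)).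
      apply: (@continuous2_cvg _ _ _ _ _ _ _ _ mul); first exact: (hmul (_, _)).
        have hh := (cvg_comp (fun x : G * G * G * G => x.1.1) fst
                  (cvg_comp fst fst (cfst _ _ (a, b, d, e)) (cfst _ _ _)) (cfst _ _ _)).
        exact hh.
      exact: (cvg_comp (fun x : G * G * G * G => x.1.1) snd
                  (cvg_comp fst fst (cfst _ _ (a, b, d, e)) (cfst _ _ _)) (csnd _ _ _)).
    exact: (cvg_comp (fun x : G * G * G * G => x.1.2) inv
                  (cvg_comp fst snd (cfst _ _ (a, b, d, e)) (csnd _ _ _)) (hinv _)).
  exact: (cvg_comp snd inv (csnd _ _ (a, b, d, e)) (hinv _)).
have Cc : compact (f @` (K `*` K `*` K `*` K)).
  apply: continuous_compact; first exact: continuous_subspaceT.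
  exact: (compact_setX (compact_setX (compact_setX hrc hrc) hrc) hrc).
pose D := [set A : set G | open A /\ forall a b, A a -> A b -> U (mul (inv a) b)].
have cov : forall x, exists A, D A /\ A x.
  move=> x.
  pose g := fun p : G * G => mul (inv p.1) p.2.
  have gc : g @ nbhs (x, x) --> g (x, x).
    apply: (@continuous2_cvg _ _ _ _ _ _ _ _ mul); first exact: (hmul (_, _)).
      exact: (cvg_comp fst inv (cfst _ _ (x, x)) (hinv _)).
    exact: (csnd _ _ (x, x)).
  have gxx : g (x, x) = one by exact: (hV x).1.
  rewrite gxx in gc.
  have := gc U hU.
  case=> [[A B] /= [hA' hB'] sub].
  exists (A `&` B)°; split; first split.
  - exact: open_interior.
  - move=> a b /interior_subset [Aa Ba] /interior_subset [Ab Bb].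
    exact: (sub (a, b)).
  - exact: nbhs_singleton (nbhs_interior (filterI hA' hB')).
pose F : set_system (seq (set G)) := fun S => exists L : seq (set G),
  (forall A, A \in L -> D A) /\
  (forall t, {subset L <= t} -> (forall A, A \in t -> D A) -> S t).
have FF : Filter F.
  split.
  - by exists [::].
  - move=> P Q [L1 [h1L h1S]] [L2 [h2L h2S]]; exists (L1 ++ L2); split.
      by move=> A; rewrite mem_cat => /orP[]; [apply: h1L|apply: h2L].
    move=> t st hD; split.
      by apply: h1S => // A hA0; apply: st; rewrite mem_cat hA0.
    by apply: h2S => // A hA0; apply: st; rewrite mem_cat hA0 orbT.
  - by move=> P Q PQ [L [hL hS]]; exists L; split => // t st hD; apply: PQ; apply: hS.
pose P := fun (t : seq (set G)) (x : G) => exists A, [/\ A \in t, D A & A x].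
move: Cc; rewrite compact_near_coveringP => Cc.
have hcv : forall x, (f @` (K `*` K `*` K `*` K)) x ->
    \forall x' \near x & i \near F, P i x'.
  move=> x _.
  have [A [DA Ax]] := cov x.
  exists (A, [set t | A \in t /\ forall B, B \in t -> D B]).
    split; first by apply: open_nbhs_nbhs; split => //; exact: DA.1.
    exists [:: A]; split; first by move=> B; rewrite inE => /eqP ->.
    by move=> t st hD; split => //; apply: st; rewrite inE.
  by case=> x' t [Ax' [At _]]; exists A.
have [L [hL hS]] := Cc _ F P FF hcv.
have KL := hS L (fun _ h => h) hL.
exists (size L) => c s us hs.
apply: (@pigeon _ _ (fun m A => exists z, [/\ A z, D A & m = mul c z]) s L us).
  move=> m ms; have [Hm [a [b [d [e [Ua Ub Ud Ue em]]]]]] := hs m ms.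
  have Kz : (f @` (K `*` K `*` K `*` K)) (mul (mul (mul a b) (inv d)) (inv e)).
    by exists (a, b, d, e) => //; do !split; apply: subset_closure.
  have [A [AL DA Az]] := KL _ Kz.
  by exists A => //; exists (mul (mul (mul a b) (inv d)) (inv e)).
move=> m m' A ms m's AL [z [Az DA em]] [z' [Az' _ em']]; subst m m'.
have Uzz := DA.2 z z' Az Az'.
have [x [_ xu]] := hpart (mul c z').
have e1 : x = mul c z.
  apply: xu; split; first exact: (hs _ ms).1.
  exists (mul (inv z) z') => //.
  by rewrite -hA (hA z) (hV z).2 (h1 z').1.
have e2 : x = mul c z'.
  apply: xu; split; first exact: (hs _ m's).1.
  by exists one; [exact: nbhs_singleton hU | exact: (h1 _).2].
by rewrite -e1 -e2.
Qed.

Theorem mainTheorem11 (G : topologicalType)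
  (mul : G -> G -> G) (inv : G -> G) (one : G) (H U : set G) :
  is_locally_compact_group mul inv one ->
  discrete_subset H ->
  borel_measurable U ->
  relatively_compact U ->
  nbhs one U ->
  coset_partition mul H U ->
  (forall h, H h -> [set mul (mul h u) (inv h) | u in U] = U) ->
  exists n : nat,
    (forall l, H l -> forall s : seq G, uniq s ->
       (forall k, k \in s ->
          H k /\ approx_block_diag mul inv H U l `&` band_diag mul inv U k !=set0) ->
       (size s <= n)%N) /\
    (forall k, H k ->
       (forall s : seq G, uniq s ->
         (forall l, l \in s ->
            H l /\ band_diag mul inv U k `&` approx_block_diag mul inv H U l !=set0) ->
         (size s <= n)%N) /\
       band_diag mul inv U k `<=`
         \bigcup_(l in [set l | H l /\
             band_diag mul inv U k `&` approx_block_diag mul inv H U l !=set0])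
           approx_block_diag mul inv H U l).
Proof.
move=> hlc hdisc hmeas hrc hU hpart hconj.
case: hlc => htg _ _.
have [n hn] := count_bound _ _ _ _ _ _ htg hrc hU hpart.
case: htg => hA h1 hV _ _.
have cj : forall h u, H h -> U u -> U (mul (mul h u) (inv h)).
  by move=> h u Hh Uu; rewrite -(hconj h Hh); exists u.
have invK : forall a, inv (inv a) = a.
  move=> a; rewrite -[RHS](h1 a).1 -[one](hV (inv a)).1 -hA (hV a).1 (h1 _).2.
  by [].
have invM : forall a b, inv (mul a b) = mul (inv b) (inv a).
  move=> a b.
  have e : mul (mul a b) (mul (inv b) (inv a)) = one.
    by rewrite -hA (hA b) (hV b).2 (h1 _).1 (hV a).2.
  by rewrite -[LHS](h1 _).2 -e hA (hV _).1 (h1 _).1.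
have cV : forall w a, mul (mul w (inv a)) a = w.
  by move=> w a; rewrite -hA (hV a).1 (h1 w).2.
have cV' : forall w a, mul (mul w a) (inv a) = w.
  by move=> w a; rewrite -hA (hV a).2 (h1 w).2.
exists n; split.
  move=> l Hl s us hs; apply: (hn l s us) => k ks.
  have [Hk [[x y] [[i [j [Hi Hj [u1 Uu1 e1] [u Uu ex] [v Uv ey]]]] [u0 Uu0 e0]]]] := hs k ks.
  rewrite /= in ex ey e0.
  split => //.
  exists u1, (mul (mul j u) (inv j)), (mul (mul j v) (inv j)), u0; split; auto.
  have kE : k = mul (mul k u0) (inv u0) by rewrite cV'.
  rewrite {1}kE e0 /= -ex -ey !invM !invK !hA e1 !(cV, cV').
  by [].
move=> k Hk; split.
  move=> s us hs; apply: (hn k s us) => l ls.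
  have [Hl [[x y] [[u0 Uu0 e0] [i [j [Hi Hj [u1 Uu1 e1] [u Uu ex] [v Uv ey]]]]]]] := hs l ls.
  rewrite /= in ex ey e0.
  split => //.
  exists u0, (mul (mul j v) (inv j)), (mul (mul j u) (inv j)), u1; split; auto.
  have lE : l = mul (mul l u1) (inv u1) by rewrite cV'.
  rewrite {1}lE e1 !invM !invK !hA e0 /= -ex -ey !invM !hA !(cV, cV').
  by [].
move=> [x y] [u0 Uu0 e0].
have [i [[Hi [u Uu ex]] _]] := hpart x.
have [j [[Hj [v Uv ey]] _]] := hpart y.
have [l [[Hl [u1 Uu1 e1]] _]] := hpart (mul i (inv j)).
have hab : approx_block_diag mul inv H U l (x, y).
  by exists i, j; split => //; [exists u1|exists u|exists v].
exists l => //; split => //.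
by exists (x, y); split => //; exists u0.
Qed.
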